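(* Let $n\ge 7$ be any integer (not necessarily prime) with $n\equiv 1$ or $5\pmod 6$. Then: (R) there exists a one-factorization $\mathcal{R}$ of $K_{2n}$ on $\{0,\dots,2n-1\}$ such that, if $n\equiv5\pmod 6$, $\mathcal{R}=\{\mathcal{R}_{i,j}:1\le i\le\frac{2n-1}{3},1\le j\le3\}$ with $\mathcal{R}_{i,1}\cup\mathcal{R}_{i,2}\cup\mathcal{R}_{i,3}=\mathcal{A}_i\cup\mathcal{B}_i\cup\mathcal{C}_{i-1}$ for $1\le i\le\frac{n-1}{2}$ and $\mathcal{R}_{i,1}=\mathcal{C}_{3i-n-2}$, $\mathcal{R}_{i,2}=\mathcal{C}_{3i-n-1}$, $\mathcal{R}_{i,3}=\mathcal{C}_{3i-n}$ for $\frac{n+1}{2}\le i\le\frac{2n-1}{3}$; and, if $n\equiv1\pmod6$, $\mathcal{R}=\{\mathcal{R}_{i,j}:1\le i\le\frac{n-1}{2},1\le j\le3\}\cup\{\mathcal{C}_i:\frac{n-1}{2}\le i\le n-1\}$ with $\mathcal{R}_{i,1}\cup\mathcal{R}_{i,2}\cup\mathcal{R}_{i,3}=\mathcal{A}_i\cup\mathcal{B}_i\cup\mathcal{C}_{i-1}$ for $1\le i\le\frac{n-1}{2}$; (T) there exists a one-factorization $\mathcal{T}$ of $K_{2n}$ on $\{0,\dots,2n-1\}$ with exactly the same properties with $\mathcal{R}$ replaced by $\mathcal{T}$ and every $\mathcal{C}_k$ replaced by $\mathcal{D}_k$.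
   Context: For $1\le i\le \frac{n-1}{2}$: $\mathcal{A}_i=\{\{x,y\}: x,y\in\{0,\dots,n-1\},\ y-x\equiv i \pmod n\}$ and $\mathcal{B}_i=\{\{x,y\}: x,y\in\{n,\dots,2n-1\},\ y-x\equiv i\pmod n\}$. For $0\le i\le n-1$: $\mathcal{C}_i=\{\{x,y\}: 0\le x\le n-1,\ n\le y\le 2n-1,\ x+y\equiv i\pmod n\}$ and $\mathcal{D}_i=\{\{x,y\}: 0\le x\le n-1,\ n\le y\le 2n-1,\ y-x\equiv i\pmod n\}$. A one-factor of $K_{2n}$ is a perfect matching; a one-factorization is a partition of the edge set of $K_{2n}$ into $2n-1$ one-factors. *)

(* Defs.v *)
From mathcomp Require Import all_boot.
Set Implicit Arguments. Unset Strict Implicit. Unset Printing Implicit Defensive.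

Notation vert n := ('I_(2 * n)).
Notation edgeset n := {set {set vert n}}.

Definition Kedges (n : nat) : edgeset n := [set e : {set vert n} | #|e| == 2].

Definition Afam (n i : nat) : edgeset n :=
  [set e : {set vert n} | [exists x : vert n, exists y : vert n,
     [&& x < n, y < n, x != y, (y + n - x) %% n == i %% n & e == [set x; y]]]].

Definition Bfam (n i : nat) : edgeset n :=
  [set e : {set vert n} | [exists x : vert n, exists y : vert n,
     [&& n <= x, n <= y, x != y, (y + n - x) %% n == i %% n & e == [set x; y]]]].

Definition Cfam (n i : nat) : edgeset n :=
  [set e : {set vert n} | [exists x : vert n, exists y : vert n,
     [&& x < n, n <= y, (x + y) %% n == i %% n & e == [set x; y]]]].

Definition Dfam (n i : nat) : edgeset n :=
  [set e : {set vert n} | [exists x : vert n, exists y : vert n,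
     [&& x < n, n <= y, (y + n - x) %% n == i %% n & e == [set x; y]]]].

Definition one_factor (n : nat) (F : edgeset n) : Prop :=
  F \subset Kedges n /\ forall v : vert n, #|[set e in F | v \in e]| = 1.

Definition one_factorization (n : nat) (I : Type) (P : I -> Prop)
    (F : I -> edgeset n) : Prop :=
  [/\ forall k, P k -> one_factor (F k),
      forall k l, P k -> P l -> k <> l -> [disjoint F k & F l]
    & forall e, e \in Kedges n -> exists k, P k /\ e \in F k].

(* The property required of R (with X = C) or of T (with X = D). *)
Definition lemma6_prop (n : nat) (X : nat -> edgeset n)
    (R : nat -> nat -> edgeset n) : Prop :=
  (n %% 6 = 5 ->
     [/\ one_factorization
           (fun p : nat * nat => (1 <= p.1 <= (2 * n - 1) %/ 3) /\ (1 <= p.2 <= 3))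
           (fun p => R p.1 p.2),
         forall i, 1 <= i <= (n - 1) %/ 2 ->
           R i 1 :|: R i 2 :|: R i 3 = Afam n i :|: Bfam n i :|: X (i - 1)
       & forall i, (n + 1) %/ 2 <= i <= (2 * n - 1) %/ 3 ->
           [/\ R i 1 = X (3 * i - n - 2), R i 2 = X (3 * i - n - 1)
             & R i 3 = X (3 * i - n)]])
  /\
  (n %% 6 = 1 ->
     one_factorization
       (fun k : (nat * nat) + nat => match k with
          | inl p => (1 <= p.1 <= (n - 1) %/ 2) /\ (1 <= p.2 <= 3)
          | inr i => (n - 1) %/ 2 <= i <= n - 1 end)
       (fun k => match k with inl p => R p.1 p.2 | inr i => X i end)
     /\ forall i, 1 <= i <= (n - 1) %/ 2 ->
           R i 1 :|: R i 2 :|: R i 3 = Afam n i :|: Bfam n i :|: X (i - 1)).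

(* Main.v *)
Require Import Defs.
From mathcomp Require Import all_boot.
From mathcomp Require Import zify.
Set Implicit Arguments. Unset Strict Implicit. Unset Printing Implicit Defensive.

Lemma disjP (T : finType) (A B : {set T}) :
  (forall x, x \in A -> x \in B -> False) -> [disjoint A & B].
Proof.
move=> H; rewrite disjoint_subset; apply/subsetP => x hA; rewrite inE.
by apply/negP => hB; exact: H x hA hB.
Qed.

Lemma set2_eq (T : finType) (x y x' y' : T) :
  [set x; y] = [set x'; y'] -> (x = x' /\ y = y') \/ (x = y' /\ y = x').
Proof.
move=> E.
have hx : x \in [set x'; y'] by rewrite -E set21.
have hy : y \in [set x'; y'] by rewrite -E set22.
have hx' : x' \in [set x; y] by rewrite E set21.
have hy' : y' \in [set x; y] by rewrite E set22.
case/set2P: hx => ex; case/set2P: hy => ey; subst.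
- by left; split=> //; case/set2P: hy' => ->.
- by left.
- by right.
- by right; split=> //; case/set2P: hx' => ->.
Qed.

Section Gen.
Variable T : finType.
Definition Mt (f : T -> T) : {set {set T}} := [set [set v; f v] | v : T].
Variable f : T -> T.
Hypothesis finv : involutive f.
Hypothesis ffix : forall v, f v != v.

Lemma Mt_mem v : [set v; f v] \in Mt f.
Proof. exact: imset_f. Qed.
Lemma MtP e : e \in Mt f -> exists v, e = [set v; f v].
Proof. by case/imsetP => v _ ->; exists v. Qed.
Lemma Mt_card v : #|[set v; f v]| = 2.
Proof. by rewrite cards2 eq_sym ffix. Qed.
Lemma Mt_inc v : [set e in Mt f | v \in e] = [set [set v; f v]].
Proof.
apply/setP => e; rewrite !inE; apply/andP/eqP.
- case=> /MtP [w ->]; rewrite !inE => /orP [/eqP -> | /eqP ->] //.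
  by rewrite finv setUC.
- by move ->; split; [exact: Mt_mem | rewrite !inE eqxx].
Qed.
Lemma Mt_inc_card v : #|[set e in Mt f | v \in e]| = 1.
Proof. by rewrite Mt_inc cards1. Qed.

End Gen.
Lemma Mt_disj (T : finType) (f g : T -> T) : involutive g -> (forall v, f v != g v) -> [disjoint Mt f & Mt g].
Proof.
move=> ginv H; apply: disjP => e /MtP [v ->] /MtP [w] /set2_eq [[E1 E2]|[E1 E2]].
- by move: (H v); rewrite E2 E1 eqxx.
- by move: (H v); rewrite E1 ginv -E1 E2 eqxx.
Qed.

Lemma mod2 a n : 0 < n -> a < 2*n -> (a %% n = a /\ a < n) \/ (a %% n = a - n /\ n <= a).
Proof.
move=> n0 a2; case: (ltnP a n) => h.
  by left; rewrite modn_small.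
right; split=> //.
have -> : a = (a - n) + n by rewrite subnK.
by rewrite modnDr modn_small ?addnK //; lia.
Qed.

Lemma mod3 a n : 0 < n -> a < 3*n -> (a %% n = a /\ a < n) \/
  (a %% n = a - n /\ n <= a /\ a < 2 * n) \/ (a %% n = a - 2 * n /\ 2 * n <= a).
Proof.
move=> n0 a3; case: (ltnP a (2*n)) => h.
  by case: (mod2 n0 h) => [|[]]; [left | right; left].
right; right; split=> //.
have -> : a = (a - 2 * n) + n + n by lia.
by rewrite !modnDr modn_small; lia.
Qed.

Lemma modn_sub1 a n : n <= a -> a < 2 * n -> a %% n = a - n.
Proof.
move=> h1 h2; have n0 : 0 < n by lia.
by case: (mod2 n0 h2) => [[_ ?]|[-> _]] //; lia.
Qed.
Lemma modn_sub2 a n : 2 * n <= a -> a < 3 * n -> a %% n = a - 2 * n.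
Proof.
move=> h1 h2; have n0 : 0 < n by lia.
by case: (mod3 n0 h2) => [[_ ?]|[[_ [? ?]]|[-> _]]] //; lia.
Qed.

Ltac modelim n :=
  repeat match goal with
  | |- context [?a %% n] =>
      lazymatch a with context [_ %% n] => fail | _ => idtac end;
      first [ rewrite (@modn_small a n); last by lia
            | rewrite (@modn_sub1 a n); [ | by lia | by lia ]
            | rewrite (@modn_sub2 a n); [ | by lia | by lia ]
            | assert_fails (have : n <= a by lia); case: (ltnP a n) => ?
            | assert_fails (have : 2 * n <= a by lia); case: (ltnP a (2 * n)) => ? ]
  end.
Ltac unval := repeat match goal with |- context [@isSub.val_subdef _ _ _ _ ?x] => change (@isSub.val_subdef _ _ _ _ x) with (nat_of_ord x) end.
Ltac clearmod := repeat match goal with H : context [_ %% _] |- _ => clear H end.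
Ltac mlia n := unval; clearmod; modelim n; lia.

Definition col n i x : nat := if x < n - i then nat_of_bool (odd (x %/ i)) else 2.

Lemma col_lt n i x : col n i x < 3.
Proof. by rewrite /col; case: ifP => //; case: odd. Qed.

Lemma col_proper n i x : 0 < i -> 2*i < n -> x < n -> col n i ((x+i)%%n) != col n i x.
Proof.
move=> i0 i2 xn; rewrite /col.
case: (ltnP (x + i) n) => h.
  rewrite modn_small //.
  have -> : x < n - i by lia.
  case: ifP => h2; last by case: odd.
  rewrite -{1}(mul1n i) addnC divnMDl // oddD /=.
  by case: odd.
have -> : (x + i) %% n = x + i - n by mlia n.
have -> : x + i - n < n - i by lia.
have -> : x < n - i = false by lia.
by rewrite divn_small //; lia.
Qed.

Section H.
Variables (n i : nat) (g : nat -> nat).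
Hypotheses (ipos : 0 < i) (i2 : 2*i < n).
Hypotheses (gb : forall v, v < 2*n -> g v < 2*n) (gtop : forall v, v < n -> n <= g v)
  (gbot : forall v, n <= v -> v < 2*n -> g v < n) (gg : forall v, v < 2*n -> g (g v) = v).

Definition Tf (j x : nat) := if col n i x == j then (x+i)%%n
  else if col n i ((x + n - i)%%n) == j then (x + n - i) %% n else g x.
Definition hf (j v : nat) := if v < n then Tf j v else g (Tf j (g v)).

Lemma pmod1 x : x < n -> ((x+i)%%n + n - i)%%n = x.
Proof. move=> *; mlia n. Qed.
Lemma pmod2 x : x < n -> ((x+n-i)%%n + i)%%n = x.
Proof. move=> *; mlia n. Qed.

Lemma Tf_top x j : x < n -> Tf j x < n -> Tf j (Tf j x) = x.
Proof.
move=> xn; rewrite /Tf.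
case: eqP => [c1|c1].
  move=> _; rewrite pmod1 // c1.
  have := col_proper ipos i2 xn; rewrite c1 => /negbTE ->.
  by rewrite eqxx.
case: eqP => [c2|c2].
  by move=> _; rewrite c2 eqxx pmod2.
have := gtop xn; lia.
Qed.

Lemma Tf_lt x j : x < n -> Tf j x < n \/ Tf j x = g x.
Proof.
move=> xn; rewrite /Tf; case: eqP => _; first by left; apply: ltn_pmod; lia.
case: eqP => _; first by left; apply: ltn_pmod; lia.
by right.
Qed.

Lemma Tf_b x j : x < n -> Tf j x < 2 * n.
Proof. move=> xn; case: (Tf_lt j xn) => [|->]; [lia | apply: gb; lia]. Qed.

Lemma Tf_ne x j : x < n -> Tf j x != x.
Proof.
move=> xn; rewrite /Tf; case: (col n i x =P j) => _; first by apply/eqP; mlia n.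
case: (col n i ((x + n - i) %% n) =P j) => _; first by apply/eqP; mlia n.
have := gtop xn; lia.
Qed.

Lemma hf_b v j : v < 2*n -> hf j v < 2*n.
Proof.
move=> vn; rewrite /hf; case: ifP => h; first exact: Tf_b.
apply: gb; apply: Tf_b; apply: gbot; lia.
Qed.

Lemma hf_top v j : v < n -> hf j v = Tf j v.
Proof. by rewrite /hf => ->. Qed.
Lemma hf_bot v j : n <= v -> hf j v = g (Tf j (g v)).
Proof. by rewrite /hf => /leq_gtF ->. Qed.

Lemma hf_inv v j : v < 2*n -> hf j (hf j v) = v.
Proof.
move=> vn; case: (ltnP v n) => h.
  rewrite (hf_top j h); case: (Tf_lt j h) => [t|t].
    by rewrite hf_top // Tf_top.
  rewrite t hf_bot ?gtop // gg ?t ?gg //; lia.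
have z := gbot h vn.
rewrite (hf_bot j h); case: (Tf_lt j z) => [t|t].
  have hb := gtop t; rewrite (hf_bot j hb) gg; last by apply: Tf_b.
  rewrite Tf_top // gg //; lia.
have gv : g v < 2 * n by apply: gb.
rewrite t gg // (hf_top j z) t gg //.
Qed.

Lemma hf_ne v j : v < 2*n -> hf j v != v.
Proof.
move=> vn; case: (ltnP v n) => h; first by rewrite hf_top // Tf_ne.
have z := gbot h vn.
rewrite hf_bot //; apply/eqP => E.
have : Tf j (g v) = g v by rewrite -{2}E gg //; apply: Tf_b.
by apply/eqP; apply: Tf_ne.
Qed.
End H.

Section H2.
Variables (n i : nat) (g : nat -> nat).
Hypotheses (ipos : 0 < i) (i2 : 2*i < n).
Hypotheses (gb : forall v, v < 2*n -> g v < 2*n) (gtop : forall v, v < n -> n <= g v)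
  (gbot : forall v, n <= v -> v < 2*n -> g v < n) (gg : forall v, v < 2*n -> g (g v) = v).

Lemma Tf_diff (x j j' : nat) : x < n -> j < 3 -> j' < 3 -> j != j' -> Tf n i g j x != Tf n i g j' x.
Proof.
move=> xn j3 j'3 jj; apply/eqP.
have Qn : (x + n - i) %% n < n by apply: ltn_pmod; lia.
have c01 : col n i x != col n i ((x + n - i) %% n).
  by rewrite -{1}(pmod2 ipos i2 xn); apply: col_proper.
have PQ : (x + i) %% n <> (x + n - i) %% n by mlia n.
have Pn : (x + i) %% n < n by apply: ltn_pmod; lia.
have G := gtop xn.
move: c01 PQ Pn Qn G (col_lt n i x) (col_lt n i ((x + n - i) %% n)); rewrite /Tf.
move: (col n i x) (col n i ((x + n - i) %% n)) => c0 c1.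
move: ((x + i) %% n) ((x + n - i) %% n) => P Q.
case: (c0 =P j) => ? /=; case: (c0 =P j') => ? /=; case: (c1 =P j) => ? /=;
  case: (c1 =P j') => ? /=; lia.
Qed.

Lemma hf_diff (v j j' : nat) : v < 2 * n -> j < 3 -> j' < 3 -> j != j' -> hf n i g j v != hf n i g j' v.
Proof.
move=> vb j3 j'3 jj; case: (ltnP v n) => h.
  by rewrite !hf_top //; apply: Tf_diff.
rewrite !hf_bot //; apply/eqP => E.
have z := gbot h vb.
have := Tf_diff z j3 j'3 jj; rewrite -(gg (Tf_b ipos i2 gb j z)) E gg ?eqxx //.
exact: Tf_b.
Qed.
End H2.

Lemma pos2n n (v : vert n) : 0 < 2 * n.
Proof. exact: leq_ltn_trans (leq0n v) (ltn_ord v). Qed.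
Definition mkV n (v : vert n) k : vert n := Ordinal (ltn_pmod k (pos2n v)).
Definition lft n (F : nat -> nat) (v : vert n) : vert n := mkV v (F v).

Lemma lft_val n (F : nat -> nat) (v : vert n) : F v < 2 * n -> val (lft F v) = F v.
Proof. by move=> h; rewrite /= modn_small. Qed.

Lemma lft_inv n (F : nat -> nat) : (forall v, v < 2*n -> F v < 2*n) ->
  (forall v, v < 2*n -> F (F v) = v) -> involutive (@lft n F).
Proof.
move=> b inv v; apply: val_inj; rewrite lft_val; rewrite ?lft_val ?inv //; exact: b.
Qed.
Lemma lft_fix n (F : nat -> nat) : (forall v, v < 2*n -> F v < 2*n) ->
  (forall v, v < 2*n -> F v != v) -> forall v : vert n, lft F v != v.
Proof. by move=> b ne v; rewrite -(inj_eq val_inj) lft_val ?ne ?b. Qed.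

Lemma one_factor_Mt n (F : nat -> nat) : (forall v, v < 2*n -> F v < 2*n) ->
  (forall v, v < 2*n -> F (F v) = v) -> (forall v, v < 2*n -> F v != v) ->
  one_factor (Mt (@lft n F)).
Proof.
move=> b inv ne; split.
  apply/subsetP => e /MtP [v ->]; rewrite inE Mt_card //; exact: lft_fix.
move=> v; apply: Mt_inc_card; exact: lft_inv.
Qed.

Lemma inA n i (a b : vert n) : 0 < i -> i < n -> a < n -> b < n ->
  (b + n - a) %% n = i \/ (a + n - b) %% n = i -> [set a; b] \in Afam n i.
Proof.
move=> i0 iN an bn [h|h]; rewrite inE; apply/existsP.
  exists a; apply/existsP; exists b; rewrite an bn (modn_small iN) h !eqxx /= ?andbT.
  by rewrite -(inj_eq val_inj) /=; apply/eqP; move: h; mlia n.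
exists b; apply/existsP; exists a; rewrite an bn (modn_small iN) h !eqxx /= setUC !eqxx /= ?andbT.
by rewrite -(inj_eq val_inj) /=; apply/eqP; move: h; mlia n.
Qed.

Lemma inB n i (a b : vert n) : 0 < i -> i < n -> n <= a -> n <= b ->
  (b + n - a) %% n = i \/ (a + n - b) %% n = i -> [set a; b] \in Bfam n i.
Proof.
have := ltn_ord a; have := ltn_ord b.
move=> hb ha i0 iN an bn [h|h]; rewrite inE; apply/existsP.
  exists a; apply/existsP; exists b; rewrite an bn (modn_small iN) h !eqxx /= ?andbT.
  by rewrite -(inj_eq val_inj) /=; apply/eqP; move: h; mlia n.
exists b; apply/existsP; exists a; rewrite an bn (modn_small iN) h !eqxx /= setUC !eqxx /= ?andbT.
by rewrite -(inj_eq val_inj) /=; apply/eqP; move: h; mlia n.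
Qed.

Lemma AP n i e : e \in Afam n i -> i < n -> exists x y : vert n,
  [/\ x < n, y < n, (y + n - x) %% n = i & e = [set x; y]].
Proof.
rewrite inE => /existsP [x /existsP [y /and5P [xn yn _ /eqP h /eqP ->]]] iN.
by exists x, y; split => //; rewrite h modn_small.
Qed.
Lemma BP n i e : e \in Bfam n i -> i < n -> exists x y : vert n,
  [/\ n <= x, n <= y, (y + n - x) %% n = i & e = [set x; y]].
Proof.
rewrite inE => /existsP [x /existsP [y /and5P [xn yn _ /eqP h /eqP ->]]] iN.
by exists x, y; split => //; rewrite h modn_small.
Qed.

Lemma inU1 (T : finType) (A B C : {set T}) x : x \in A -> x \in A :|: B :|: C.
Proof. by move=> h; rewrite !in_setU h. Qed.
Lemma inU2 (T : finType) (A B C : {set T}) x : x \in B -> x \in A :|: B :|: C.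
Proof. by move=> h; rewrite !in_setU h orbT. Qed.
Lemma inU3 (T : finType) (A B C : {set T}) x : x \in C -> x \in A :|: B :|: C.
Proof. by move=> h; rewrite !in_setU h !orbT. Qed.

Section Lev.
Variables (n i : nat) (g : nat -> nat).
Hypotheses (ipos : 0 < i) (i2 : 2*i < n).
Hypotheses (gb : forall v, v < 2*n -> g v < 2*n) (gtop : forall v, v < n -> n <= g v)
  (gbot : forall v, n <= v -> v < 2*n -> g v < n) (gg : forall v, v < 2*n -> g (g v) = v).
Hypothesis GB1 : forall z, z < n ->
  (g z + n - g ((z + i) %% n)) %% n = i \/ (g ((z + i) %% n) + n - g z) %% n = i.
Hypothesis GB2 : forall a b, n <= a -> a < 2*n -> n <= b -> b < 2*n ->
  (b + n - a) %% n = i -> exists2 z, z < n &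
   (a = g ((z + i) %% n) /\ b = g z) \/ (a = g z /\ b = g ((z + i) %% n)).

Definition Fj j := Mt (@lft n (hf n i g j)).

Lemma hfv j (v : vert n) : val (lft (hf n i g j) v) = hf n i g j v.
Proof. by rewrite lft_val //; apply: hf_b. Qed.

Lemma memF j (v w : vert n) : j < 3 -> val w = hf n i g j v ->
  [set v; w] \in Fj 0 :|: Fj 1 :|: Fj 2.
Proof.
move=> j3 E; have -> : w = lft (hf n i g j) v by apply: val_inj; rewrite hfv.
case: j j3 {E} => [|[|[|]]] // _; [apply: inU1 | apply: inU2 | apply: inU3]; exact: Mt_mem.
Qed.

Lemma gv_lt (v : vert n) : g v < 2 * n.
Proof. exact: gb. Qed.

Lemma lev_union : Fj 0 :|: Fj 1 :|: Fj 2 = Afam n i :|: Bfam n i :|: Mt (lft g).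
Proof.
have iN : i < n by lia.
apply/setP => e; apply/idP/idP.
- have H : forall j, e \in Fj j -> e \in Afam n i :|: Bfam n i :|: Mt (lft g).
    move=> j /MtP [v ->]; move: (hfv j v); move: (lft _ v) => w wv.
    have vb := ltn_ord v.
    case: (ltnP v n) => h.
      move: wv; rewrite hf_top // /Tf.
      case: (col n i v =P j) => _ /=.
        move=> wv; apply: inU1; rewrite inA //; first by rewrite wv; apply: ltn_pmod; lia.
        by left; rewrite wv; mlia n.
      case: (col n i ((v + n - i) %% n) =P j) => _ /= wv.
        apply: inU1; rewrite inA //; first by rewrite wv; apply: ltn_pmod; lia.
        by right; rewrite wv; mlia n.
      have -> : w = lft g v by apply: val_inj; rewrite lft_val ?wv //; exact: gb.
      by apply: inU3; rewrite Mt_mem.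
    move: wv; rewrite hf_bot // /Tf.
    have vz := gg vb; move: vz (gbot h vb); move: (g v) => u vz z.
    case: (col n i u =P j) => _ /=.
      move=> wv; rewrite setUC; apply: inU2; rewrite inB //.
      - by rewrite wv; apply: gtop; apply: ltn_pmod; lia.
      by rewrite wv -vz; case: (GB1 z) => ->; by [left | right].
    case: (col n i ((u + n - i) %% n) =P j) => _ /= wv.
      apply: inU2; rewrite inB //.
      - by rewrite wv; apply: gtop; apply: ltn_pmod; lia.
      have z' : (u + n - i) %% n < n by apply: ltn_pmod; lia.
      rewrite wv -vz -{2 3}(pmod2 ipos i2 z) //; case: (GB1 z') => ->; by [left | right].
    rewrite vz in wv; have -> : w = lft g v by apply: val_inj; rewrite lft_val ?wv //; exact: gb.
    by apply: inU3; rewrite Mt_mem.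
  by move=> /setUP [/setUP [] | ]; apply: H.
- move=> /setUP [/setUP [] | ].
  + case/AP => // x [y [xn yn h ->]].
    apply: (memF (j := col n i x)); first exact: col_lt.
    by rewrite hf_top // /Tf eqxx; move: h; mlia n.
  + case/BP => // x [y [xn yn h ->]].
    have [z zn [[ex ey] | [ex ey]]] := GB2 xn (ltn_ord x) yn (ltn_ord y) h.
      rewrite setUC; apply: (memF (j := col n i z)); first exact: col_lt.
      by rewrite hf_bot ey ?gtop // gg ?eqxx; [rewrite /Tf eqxx | lia].
    apply: (memF (j := col n i z)); first exact: col_lt.
    by rewrite hf_bot ex ?gtop // gg ?eqxx; [rewrite /Tf eqxx | lia].
  + case/MtP => v ->; have vb := ltn_ord v; set w := lft g v.
    have wv : val w = g v by rewrite lft_val //; exact: gb.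
    have third : forall u, u < n -> exists2 j, j < 3 & Tf n i g j u = g u.
      move=> u un; set c0 := col n i u; set c1 := col n i ((u + n - i) %% n).
      have c01 : c0 != c1.
        rewrite /c0 -{1}(pmod2 ipos i2 un); apply: col_proper => //; apply: ltn_pmod; lia.
      have := col_lt n i u; have := col_lt n i ((u + n - i) %% n); rewrite -/c0 -/c1.
      move=> h1 h0; exists (3 - c0 - c1); first lia.
      rewrite /Tf -/c0 -/c1; case: eqP; first lia.
      by case: eqP; first lia.
    case: (ltnP v n) => h.
      have [j j3 E] := third v h.
      by apply: (memF (j := j)) => //; rewrite wv hf_top.
    have wn : w < n by rewrite wv; apply: gbot.
    have [j j3 E] := third w wn.
    rewrite setUC; apply: (memF (j := j)) => //.
    by rewrite hf_top // E wv gg.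
Qed.

Lemma lev_one j : one_factor (Fj j).
Proof.
apply: one_factor_Mt => v vb; [exact: hf_b | exact: hf_inv | exact: hf_ne].
Qed.
End Lev.

Definition gC n k v := if v < n then n + (k + n - v) %% n else (k + 2 * n - v) %% n.
Definition gD n k v := if v < n then n + (v + k) %% n else (v - k) %% n.

Section G.
Variables n k : nat.
Hypothesis kn : k < n.

Lemma gC_b v : v < 2 * n -> gC n k v < 2 * n.
Proof. rewrite /gC; case: ifP; mlia n. Qed.
Lemma gC_top v : v < n -> n <= gC n k v.
Proof. rewrite /gC; case: ifP; mlia n. Qed.
Lemma gC_bot v : n <= v -> v < 2 * n -> gC n k v < n.
Proof. rewrite /gC; case: ifP; mlia n. Qed.
Lemma gC_gg v : v < 2 * n -> gC n k (gC n k v) = v.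
Proof. rewrite {2}/gC; case: ifP => h vb; rewrite /gC.
  have -> : n + (k + n - v) %% n < n = false by lia.
  mlia n.
have -> : (k + 2 * n - v) %% n < n by apply: ltn_pmod; lia.
mlia n.
Qed.
Lemma gD_b v : v < 2 * n -> gD n k v < 2 * n.
Proof. rewrite /gD; case: ifP; mlia n. Qed.
Lemma gD_top v : v < n -> n <= gD n k v.
Proof. rewrite /gD; case: ifP; mlia n. Qed.
Lemma gD_bot v : n <= v -> v < 2 * n -> gD n k v < n.
Proof. rewrite /gD; case: ifP; mlia n. Qed.
Lemma gD_gg v : v < 2 * n -> gD n k (gD n k v) = v.
Proof. rewrite {2}/gD; case: ifP => h vb; rewrite /gD.
  have -> : n + (v + k) %% n < n = false by lia.
  mlia n.
have -> : (v - k) %% n < n by apply: ltn_pmod; lia.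
mlia n.
Qed.
End G.

Lemma Cfam_Mt n k : k < n -> Cfam n k = Mt (@lft n (gC n k)).
Proof.
move=> kn; apply/setP => e; apply/idP/idP.
  rewrite inE => /existsP [x /existsP [y /and4P [xn yn /eqP h /eqP ->]]].
  have -> : y = lft (gC n k) x.
    apply: val_inj; rewrite lft_val; last exact: gC_b.
    by rewrite /gC xn; have yb := ltn_ord y; move: h; rewrite (modn_small kn); mlia n.
  exact: Mt_mem.
case/MtP => v ->; have vb := ltn_ord v.
move: (lft_val (F := gC n k) (gC_b kn vb)); move: (lft _ v) => w wv.
rewrite inE; apply/existsP; case: (ltnP v n) => h.
  exists v; apply/existsP; exists w; rewrite h eqxx /= andbT wv /gC h.
  rewrite (modn_small kn); apply/andP; split; [lia | apply/eqP; mlia n].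
exists w; apply/existsP; exists v; rewrite h setUC eqxx /= andbT wv /gC.
have -> : v < n = false by lia.
rewrite (modn_small kn); apply/andP; split; [apply: ltn_pmod; lia | apply/eqP; mlia n].
Qed.

Lemma Dfam_Mt n k : k < n -> Dfam n k = Mt (@lft n (gD n k)).
Proof.
move=> kn; apply/setP => e; apply/idP/idP.
  rewrite inE => /existsP [x /existsP [y /and4P [xn yn /eqP h /eqP ->]]].
  have -> : y = lft (gD n k) x.
    apply: val_inj; rewrite lft_val; last exact: gD_b.
    by rewrite /gD xn; have yb := ltn_ord y; move: h; rewrite (modn_small kn); mlia n.
  exact: Mt_mem.
case/MtP => v ->; have vb := ltn_ord v.
move: (lft_val (F := gD n k) (gD_b kn vb)); move: (lft _ v) => w wv.
rewrite inE; apply/existsP; case: (ltnP v n) => h.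
  exists v; apply/existsP; exists w; rewrite h eqxx /= andbT wv /gD h.
  rewrite (modn_small kn); apply/andP; split; [lia | apply/eqP; mlia n].
exists w; apply/existsP; exists v; rewrite h setUC eqxx /= andbT wv /gD.
have -> : v < n = false by lia.
rewrite (modn_small kn); apply/andP; split; [apply: ltn_pmod; lia | apply/eqP; mlia n].
Qed.

Section GBs.
Variables n i : nat.
Hypotheses (ipos : 0 < i) (i2 : 2 * i < n).

Lemma GB1C z : z < n ->
  (gC n (i-1) z + n - gC n (i-1) ((z + i) %% n)) %% n = i \/
  (gC n (i-1) ((z + i) %% n) + n - gC n (i-1) z) %% n = i.
Proof.
move=> zn; have zi : (z + i) %% n < n by apply: ltn_pmod; lia.
by left; rewrite /gC zn zi; mlia n.
Qed.
Lemma GB1D z : z < n ->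
  (gD n (i-1) z + n - gD n (i-1) ((z + i) %% n)) %% n = i \/
  (gD n (i-1) ((z + i) %% n) + n - gD n (i-1) z) %% n = i.
Proof.
move=> zn; have zi : (z + i) %% n < n by apply: ltn_pmod; lia.
by right; rewrite /gD zn zi; mlia n.
Qed.

Lemma GB2C a b : n <= a -> a < 2*n -> n <= b -> b < 2*n ->
  (b + n - a) %% n = i -> exists2 z, z < n &
   (a = gC n (i-1) ((z + i) %% n) /\ b = gC n (i-1) z) \/
   (a = gC n (i-1) z /\ b = gC n (i-1) ((z + i) %% n)).
Proof.
move=> an ab bn bb h; exists (gC n (i-1) b); first by apply: gC_bot => //; lia.
have -> : gC n (i-1) b = (i - 1 + 2 * n - b) %% n.
  by rewrite /gC; have -> : b < n = false by lia.
left.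
have zi : ((i - 1 + 2 * n - b) %% n + i) %% n < n by apply: ltn_pmod; lia.
have zn : (i - 1 + 2 * n - b) %% n < n by apply: ltn_pmod; lia.
rewrite /gC zi zn; move: h; mlia n.
Qed.

Lemma GB2D a b : n <= a -> a < 2*n -> n <= b -> b < 2*n ->
  (b + n - a) %% n = i -> exists2 z, z < n &
   (a = gD n (i-1) ((z + i) %% n) /\ b = gD n (i-1) z) \/
   (a = gD n (i-1) z /\ b = gD n (i-1) ((z + i) %% n)).
Proof.
move=> an ab bn bb h; exists (gD n (i-1) a); first by apply: gD_bot => //; lia.
have -> : gD n (i-1) a = (a - (i - 1)) %% n.
  by rewrite /gD; have -> : a < n = false by lia.
right.
have zi : ((a - (i - 1)) %% n + i) %% n < n by apply: ltn_pmod; lia.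
have zn : (a - (i - 1)) %% n < n by apply: ltn_pmod; lia.
rewrite /gD zi zn; move: h; mlia n.
Qed.
End GBs.

Lemma mem2 (T : finType) (x y v : T) : v \in [set x; y] -> v = x \/ v = y.
Proof. by move/set2P. Qed.

Lemma A_top n i e (v : vert n) : e \in Afam n i -> v \in e -> v < n.
Proof.
rewrite inE => /existsP [x /existsP [y /and5P [xn yn _ _ /eqP ->]]].
by case/mem2 => ->.
Qed.
Lemma B_bot n i e (v : vert n) : e \in Bfam n i -> v \in e -> n <= v.
Proof.
rewrite inE => /existsP [x /existsP [y /and5P [xn yn _ _ /eqP ->]]].
by case/mem2 => ->.
Qed.

Lemma AA n i i' e : 0 < i -> 0 < i' -> i + i' < n -> e \in Afam n i -> e \in Afam n i' -> i = i'.
Proof.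
move=> i0 i'0 ii /AP h /AP h'.
have [x [y [xn yn hx E]]] := h ltac:(lia); subst e.
have [x' [y' [xn' yn' hx' /set2_eq [[ex ey]|[ex ey]]]]] := h' ltac:(lia).
  by rewrite -hx -hx' ex ey.
move: hx hx'; rewrite ex ey => hx hx'.
exfalso; move: hx hx'; mlia n.
Qed.
Lemma BB n i i' e : 0 < i -> 0 < i' -> i + i' < n -> e \in Bfam n i -> e \in Bfam n i' -> i = i'.
Proof.
move=> i0 i'0 ii /BP h /BP h'.
have [x [y [xn yn hx E]]] := h ltac:(lia); subst e.
have [x' [y' [xn' yn' hx' /set2_eq [[ex ey]|[ex ey]]]]] := h' ltac:(lia).
  by rewrite -hx -hx' ex ey.
move: hx hx'; rewrite ex ey => hx hx'.
have xb := ltn_ord x'; have yb := ltn_ord y'.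
exfalso; move: hx hx'; mlia n.
Qed.

Section Asm.
Variable n : nat.
Hypothesis n7 : 7 <= n.
Hypothesis n2 : n %% 2 = 1.
Variable gX : nat -> nat -> nat.
Variable X : nat -> edgeset n.
Hypotheses (gb : forall k v, k < n -> v < 2*n -> gX k v < 2*n)
  (gtop : forall k v, k < n -> v < n -> n <= gX k v)
  (gbot : forall k v, k < n -> n <= v -> v < 2*n -> gX k v < n)
  (gg : forall k v, k < n -> v < 2*n -> gX k (gX k v) = v).
Hypothesis Xeq : forall k, k < n -> X k = Mt (@lft n (gX k)).
Hypothesis Xdiff : forall k k' v, k < n -> k' < n -> k != k' -> v < 2*n -> gX k v != gX k' v.
Hypothesis GB1 : forall i z, 0 < i -> 2*i < n -> z < n ->
  (gX (i-1) z + n - gX (i-1) ((z + i) %% n)) %% n = i \/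
  (gX (i-1) ((z + i) %% n) + n - gX (i-1) z) %% n = i.
Hypothesis GB2 : forall i a b, 0 < i -> 2*i < n -> n <= a -> a < 2*n -> n <= b -> b < 2*n ->
  (b + n - a) %% n = i -> exists2 z, z < n &
   (a = gX (i-1) ((z + i) %% n) /\ b = gX (i-1) z) \/
   (a = gX (i-1) z /\ b = gX (i-1) ((z + i) %% n)).
Hypothesis Xcross : forall a b : vert n, a < n -> n <= b -> exists2 k, k < n & [set a; b] \in X k.

Definition F i j := Fj n i (gX (i-1)) (j-1).
Definition Lv i := Afam n i :|: Bfam n i :|: X (i-1).

Lemma X_one k : k < n -> one_factor (X k).
Proof.
move=> kn; rewrite Xeq //; apply: one_factor_Mt => v vb; first exact: gb.
  exact: gg.
apply/eqP => E; case: (ltnP v n) => h; [have := gtop kn h | have := gbot kn h vb]; rewrite E; lia.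
Qed.

Lemma X_cross k e : k < n -> e \in X k -> exists v w : vert n, [/\ v \in e, w \in e, v < n & n <= w].
Proof.
move=> kn; rewrite Xeq // => /MtP [v ->].
have vb := ltn_ord v.
have wv : val (lft (gX k) v) = gX k v by rewrite lft_val //; exact: gb.
case: (ltnP v n) => h.
  exists v, (lft (gX k) v); rewrite set21 set22; split => //; rewrite wv; exact: gtop.
exists (lft (gX k) v), v; rewrite set21 set22; split => //; rewrite wv; exact: gbot.
Qed.

Lemma AXd i k : k < n -> [disjoint Afam n i & X k].
Proof.
move=> kn; apply: disjP => e hA /(X_cross kn) [v [w [_ we _ wn]]].
by have := A_top hA we; lia.
Qed.
Lemma BXd i k : k < n -> [disjoint Bfam n i & X k].
Proof.
move=> kn; apply: disjP => e hB /(X_cross kn) [v [w [ve _ vn _]]].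
by have := B_bot hB ve; lia.
Qed.
Lemma ABd i i' : [disjoint Afam n i & Bfam n i'].
Proof.
apply: disjP => e hA hB.
have : e != set0.
  by rewrite inE in hA; case/existsP: hA => x /existsP [y /and5P [_ _ _ _ /eqP ->]]; apply/set0Pn; exists x; rewrite set21.
case/set0Pn => v ve.
by have := A_top hA ve; have := B_bot hB ve; lia.
Qed.
Lemma XXd k k' : k < n -> k' < n -> k != k' -> [disjoint X k & X k'].
Proof.
move=> kn k'n kk; rewrite !Xeq //; apply: Mt_disj.
  by apply: lft_inv => v vb; [exact: gb | exact: gg].
move=> v; rewrite -(inj_eq val_inj) !lft_val ?Xdiff //; exact: gb.
Qed.

Lemma dI (A B : edgeset n) e : [disjoint A & B] -> e \in A -> e \in B -> False.
Proof. by move=> D hA hB; move: D; rewrite disjoint_subset => /subsetP /(_ e hA); rewrite inE hB. Qed.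

Lemma LLd i i' : 1 <= i <= (n-1) %/ 2 -> 1 <= i' <= (n-1) %/ 2 -> i != i' ->
  [disjoint Lv i & Lv i'].
Proof.
move=> hi hi' ii; apply: disjP => e.
move=> /setUP [/setUP [] | ] h1 /setUP [/setUP [] | ] h2.
- by move/eqP: ii; apply; apply: (AA _ _ _ h1 h2); lia.
- by apply: (dI (ABd i i') h1 h2).
- by apply: (dI (AXd i (_ : i' - 1 < n)) h1 h2); lia.
- by apply: (dI (ABd i' i) h2 h1).
- by move/eqP: ii; apply; apply: (BB _ _ _ h1 h2); lia.
- by apply: (dI (BXd i (_ : i' - 1 < n)) h1 h2); lia.
- by apply: (dI (AXd i' (_ : i - 1 < n)) h2 h1); lia.
- by apply: (dI (BXd i' (_ : i - 1 < n)) h2 h1); lia.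
- by apply: (dI (XXd (_ : i - 1 < n) (_ : i' - 1 < n) (_ : i - 1 != i' - 1)) h1 h2); lia.
Qed.

Lemma LXd i k : 1 <= i <= (n-1) %/ 2 -> k < n -> k != i - 1 -> [disjoint Lv i & X k].
Proof.
move=> hi kn ki; apply: disjP => e /setUP [/setUP [] | ] h1 h2.
- exact: (dI (AXd i kn) h1 h2).
- exact: (dI (BXd i kn) h1 h2).
- by apply: (dI (XXd (_ : i - 1 < n) kn (_ : i - 1 != k)) h1 h2); [lia | rewrite eq_sym].
Qed.

Section Lvl.
Variables i : nat.
Hypothesis hi : 1 <= i <= (n-1) %/ 2.
Let ipos : 0 < i. Proof. lia. Qed.
Let i2 : 2 * i < n. Proof. lia. Qed.
Let kn : i - 1 < n. Proof. lia. Qed.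
Let gb' v : v < 2*n -> gX (i-1) v < 2*n. Proof. exact: gb. Qed.
Let gtop' v : v < n -> n <= gX (i-1) v. Proof. exact: gtop. Qed.
Let gbot' v : n <= v -> v < 2*n -> gX (i-1) v < n. Proof. exact: gbot. Qed.
Let gg' v : v < 2*n -> gX (i-1) (gX (i-1) v) = v. Proof. exact: gg. Qed.
Let GB1' z : z < n -> (gX (i-1) z + n - gX (i-1) ((z + i) %% n)) %% n = i \/
  (gX (i-1) ((z + i) %% n) + n - gX (i-1) z) %% n = i. Proof. exact: GB1. Qed.
Let GB2' a b : n <= a -> a < 2*n -> n <= b -> b < 2*n ->
  (b + n - a) %% n = i -> exists2 z, z < n &
   (a = gX (i-1) ((z + i) %% n) /\ b = gX (i-1) z) \/
   (a = gX (i-1) z /\ b = gX (i-1) ((z + i) %% n)). Proof. exact: GB2. Qed.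

Lemma F_union : F i 1 :|: F i 2 :|: F i 3 = Lv i.
Proof. rewrite /F /Lv (Xeq kn); exact: lev_union. Qed.

Lemma F_one j : one_factor (F i j).
Proof. exact: lev_one. Qed.

Lemma F_diff j j' : 1 <= j <= 3 -> 1 <= j' <= 3 -> j != j' -> [disjoint F i j & F i j'].
Proof.
move=> hj hj' jj; apply: Mt_disj.
  by apply: lft_inv => v vb; [exact: hf_b | exact: hf_inv].
move=> v; rewrite -(inj_eq val_inj) !lft_val; last 2 first.
- exact: hf_b.
- exact: hf_b.
apply: hf_diff => //; lia.
Qed.

Lemma F_sub j e : 1 <= j <= 3 -> e \in F i j -> e \in Lv i.
Proof.
move=> hj h; rewrite -F_union.
case: j hj h => [|[|[|[|]]]] // _ h; [exact: inU1 | exact: inU2 | exact: inU3].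
Qed.
End Lvl.

Lemma cover e : e \in Kedges n ->
  (exists2 i, 1 <= i <= (n-1) %/ 2 & e \in Lv i) \/
  (exists2 k, (n-1) %/ 2 <= k < n & e \in X k).
Proof.
rewrite inE => /cards2P [a [b [ab ->]]].
wlog lt : a b ab / (a : nat) < b.
  move=> H; case: (ltngtP a b) => h; first exact: H.
    by rewrite setUC; apply: H; rewrite // eq_sym.
  by case/eqP: ab; apply: val_inj.
have ab2 := ltn_ord b.
case: (ltnP b n) => hb.
  case: (leqP (b - a) ((n - 1) %/ 2)) => hd.
    left; exists (b - a); first lia.
    by apply: inU1; apply: inA; try lia; left; mlia n.
  left; exists (n - (b - a)); first lia.
  by apply: inU1; apply: inA; try lia; right; mlia n.
case: (ltnP a n) => ha.
  have [k kn hk] := Xcross ha hb.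
  case: (ltnP k ((n - 1) %/ 2)) => hk2.
    left; exists k.+1; first lia.
    by apply: inU3; rewrite subn1 /=.
  by right; exists k => //; lia.
case: (leqP (b - a) ((n - 1) %/ 2)) => hd.
  left; exists (b - a); first lia.
  by apply: inU2; apply: inB; try lia; left; mlia n.
left; exists (n - (b - a)); first lia.
by apply: inU2; apply: inB; try lia; right; mlia n.
Qed.

Definition fac (d : (nat * nat) + nat) : edgeset n :=
  match d with inl p => F p.1 p.2 | inr k => X k end.
Definition valid (d : (nat * nat) + nat) : Prop :=
  match d with inl p => (1 <= p.1 <= (n-1) %/ 2) /\ (1 <= p.2 <= 3)
  | inr k => (n-1) %/ 2 <= k <= n - 1 end.

Lemma fac_one d : valid d -> one_factor (fac d).
Proof.
case: d => [[i j]|k] /=; first by case=> hi _; apply: F_one.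
move=> hk; apply: X_one; lia.
Qed.

Lemma fac_disj d d' : valid d -> valid d' -> d <> d' -> [disjoint fac d & fac d'].
Proof.
case: d => [[i j]|k]; case: d' => [[i' j']|k'] /=.
- case=> hi hj [hi' hj'] dd.
  case: (eqVneq i i') => [ei|ii].
    subst i'; apply: F_diff => //; apply/eqP => ej; apply: dd; by rewrite ej.
  apply: disjP => e h1 h2.
  exact: (dI (LLd hi hi' ii) (F_sub hi hj h1) (F_sub hi' hj' h2)).
- case=> hi hj hk _; apply: disjP => e h1 h2.
  by apply: (dI (LXd hi (_ : k' < n) (_ : k' != i - 1)) (F_sub hi hj h1) h2); lia.
- move=> hk [hi' hj] _; apply: disjP => e h1 h2.
  by apply: (dI (LXd hi' (_ : k < n) (_ : k != i' - 1)) (F_sub hi' hj h2) h1); lia.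
- move=> hk hk' kk; apply: XXd; try lia.
  by apply/eqP => e; apply: kk; rewrite e.
Qed.

Lemma fac_cover e : e \in Kedges n -> exists d, valid d /\ e \in fac d.
Proof.
case/cover => [[i hi]|[k hk he]].
  rewrite -F_union // => /setUP [/setUP [] | ] he.
  - by exists (inl (i, 1)).
  - by exists (inl (i, 2)).
  - by exists (inl (i, 3)).
by exists (inr k); split => //=; lia.
Qed.

Definition R i j := if i <= (n-1) %/ 2 then F i j else X (3 * i - n - 2 + (j - 1)).

Lemma case5 : n %% 6 = 5 -> lemma6_prop X R.
Proof.
move=> n5; split; last by lia.
move=> _; split.
- set desc := fun p : nat * nat => if p.1 <= (n-1) %/ 2 then inl p
     else inr (3 * p.1 - n - 2 + (p.2 - 1)) : (nat * nat) + nat.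
  have Rd : forall p, (1 <= p.1 <= (2 * n - 1) %/ 3) /\ (1 <= p.2 <= 3) ->
      R p.1 p.2 = fac (desc p) /\ valid (desc p).
    move=> [i j] /= [hi hj]; rewrite /R /desc /=.
    by case: ifP => h /=; split => //; lia.
  split.
  + by move=> p /Rd [-> ?]; apply: fac_one.
  + move=> p q hp hq pq; have [-> vp] := Rd p hp; have [-> vq] := Rd q hq.
    apply: fac_disj => // E; apply: pq; clear vp vq; move: E hp hq; rewrite /desc.
    case: p => [i j]; case: q => [i' j'] /=.
    case: ifP => h1; case: ifP => h2 E; try discriminate E.
    * by move: E => [-> ->].
    * move: E => [E] [hi hj] [hi' hj']; have ei : i = i' by lia.
      by subst i'; have -> : j = j' by lia.
  + move=> e /fac_cover [[[i j]|k] [vd he]].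
      exists (i, j); rewrite /R /=; case: vd => /= hi hj; split; first lia.
      by have -> : i <= (n-1) %/ 2 by lia.
    move: vd => /= vd; exists ((k + n + 2) %/ 3, (k + n + 2) %% 3 + 1); split => /=; first lia.
    rewrite /R; have -> : (k + n + 2) %/ 3 <= (n-1) %/ 2 = false by lia.
    by have -> : 3 * ((k + n + 2) %/ 3) - n - 2 + ((k + n + 2) %% 3 + 1 - 1) = k
      by lia.
- move=> i hi; rewrite /R.
  have -> : i <= (n-1) %/ 2 by lia.
  by rewrite F_union.
- move=> i hi; rewrite /R.
  have -> : i <= (n-1) %/ 2 = false by lia.
  split; congr X; lia.
Qed.

Lemma case1 : n %% 6 = 1 -> lemma6_prop X R.
Proof.
move=> n1; split; first by lia.
move=> _; split.
- have Rd : forall d : (nat * nat) + nat, valid d ->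
     (match d with inl p => R p.1 p.2 | inr i => X i end) = fac d.
    by case=> [[i j]|k] //= [hi hj]; rewrite /R; have -> : i <= (n-1) %/ 2 by lia.
  split.
  + by move=> d hd; rewrite Rd //; apply: fac_one.
  + by move=> d d' hd hd' dd; rewrite !Rd //; apply: fac_disj.
  + move=> e /fac_cover [d [vd he]]; exists d; split => //; by rewrite Rd.
- move=> i hi; rewrite /R.
  have -> : i <= (n-1) %/ 2 by lia.
  by rewrite F_union.
Qed.
End Asm.

Lemma gC_diff n k k' v : k < n -> k' < n -> k != k' -> v < 2*n -> gC n k v != gC n k' v.
Proof. move=> *; apply/eqP; rewrite /gC; case: ifP => h; mlia n. Qed.
Lemma gD_diff n k k' v : k < n -> k' < n -> k != k' -> v < 2*n -> gD n k v != gD n k' v.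
Proof. move=> *; apply/eqP; rewrite /gD; case: ifP => h; mlia n. Qed.

Lemma Ccross n (a b : vert n) : a < n -> n <= b -> exists2 k, k < n & [set a; b] \in Cfam n k.
Proof.
move=> an bn; have n0 : 0 < n by lia.
exists ((a + b) %% n); first exact: ltn_pmod.
rewrite inE; apply/existsP; exists a; apply/existsP; exists b.
by rewrite an bn modn_mod !eqxx.
Qed.
Lemma Dcross n (a b : vert n) : a < n -> n <= b -> exists2 k, k < n & [set a; b] \in Dfam n k.
Proof.
move=> an bn; have n0 : 0 < n by lia.
exists ((b + n - a) %% n); first exact: ltn_pmod.
rewrite inE; apply/existsP; exists a; apply/existsP; exists b.
by rewrite an bn modn_mod !eqxx.
Qed.

Ltac solveX := first [ by move=> k v kn; apply: gC_b | by move=> k v kn; apply: gC_top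
  | by move=> k v kn; apply: gC_bot | by move=> k v kn; apply: gC_gg
  | by move=> k kn; apply: Cfam_Mt | by move=> k k' v; apply: gC_diff
  | by move=> i z ipos i2; apply: GB1C | by move=> i a b ipos i2; apply: GB2C
  | by move=> a b; apply: Ccross
  | by move=> k v kn; apply: gD_b | by move=> k v kn; apply: gD_top
  | by move=> k v kn; apply: gD_bot | by move=> k v kn; apply: gD_gg
  | by move=> k kn; apply: Dfam_Mt | by move=> k k' v; apply: gD_diff
  | by move=> i z ipos i2; apply: GB1D | by move=> i a b ipos i2; apply: GB2D
  | by move=> a b; apply: Dcross ].

Theorem lemma6 (n : nat) :
  7 <= n -> (n %% 6 = 1 \/ n %% 6 = 5) ->
  (exists R : nat -> nat -> edgeset n, lemma6_prop (Cfam n) R) /\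
  (exists T : nat -> nat -> edgeset n, lemma6_prop (Dfam n) T).
Proof.
move=> n7 n6; have n2 : n %% 2 = 1 by lia.
split.
- exists (@R n (gC n) (Cfam n)).
  by case: n6 => h; [apply: (case1 n7 n2) | apply: (case5 n7 n2)]; try exact: h; solveX.
- exists (@R n (gD n) (Dfam n)).
  by case: n6 => h; [apply: (case1 n7 n2) | apply: (case5 n7 n2)]; try exact: h; solveX.
Qed.
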